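(* If $\Delta\,\mathcal{R}\,\Theta$ with $\mathcal{R}$ a cs-bisimulation up to convex hull, then $\Delta \sim_{cs} \Theta$.
   Context: For a relation $\mathcal{R}$ on distributions, its convex hull $Cv(\mathcal{R})$ is the least relation containing $(\sum_{i\in I} p_i\cdot\Delta_i,\ \sum_{i\in I} p_i\cdot\Theta_i)$ whenever $\Delta_i \mathcal{R} \Theta_i$ for all $i$ and $\sum_i p_i = 1$. lqCCS extended configurations $\langle\!\langle \rho, P, R \rangle\!\rangle$ consist of a density operator, a process, and an observer (a process without $\tau$ and restriction whose sums are only sums of inputs on distinct channels); contexts are $O[\cdot] = [\cdot] \parallel R'$ with $R'$ an observer. The enhanced semantics has transitions $\rightsquigarrow_\pi$ indexed by $\pi = \diamond$ (only the process moves) or $\pi \in \{\ell,r\}^*$ (naming the observer component that acts), lifted to distributions so that all configurations in the support move with the same index. A relation $\mathcal{R}$ is a cs-bisimulation up to convex hull if $\Delta\mathcal{R}\Theta$ implies, for every context $O[\cdot]$: $\Delta$ and $\Theta$ satisfy the same barbs (probability of being ready to output on each free channel, and probability of deadlock $\bot$); whenever $O[\Delta] \rightsquigarrow_\pi \Delta'$ there is $\Theta'$ with $O[\Theta] \rightsquigarrow_\pi \Theta'$ and $\Delta'\,Cv(\mathcal{R})\,\Theta'$; and symmetrically. $\sim_{cs}$ is the largest relation satisfying the same conditions with $\mathcal{R}$ in place of $Cv(\mathcal{R})$. *)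

(* Defs.v *)
From HB Require Import structures.
From mathcomp Require Import all_boot all_order all_algebra.
From mathcomp Require Import boolp classical_sets functions cardinality fsbigop reals.
Set Implicit Arguments. Unset Strict Implicit. Unset Printing Implicit Defensive.
Import Order.TTheory GRing.Theory Num.Theory.
Local Open Scope classical_set_scope.
Local Open Scope ring_scope.

(* Abstract presentation of the lqCCS enhanced semantics:
   - Conf : extended configurations <<rho, P, R>>;
   - Obs  : observers R' (contexts O[.] = [.] || R');
   - plug O c : the configuration O[c];
   - Idx  : transition indices, None = diamond, Some pi with pi in {l,r}^* (true = l);
   - step c pi D : the enhanced transition c ~>_pi D on configurations;
   - Barb : barb labels (free output channels and deadlock _|_),
     ready c b : configuration c exhibits barb b. *)

Definition Idx := option (seq bool).

Section LQCCS.
Variables (R : realType) (Conf : choiceType) (Obs Barb : Type).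
Variable plug : Obs -> Conf -> Conf.
Variable step : Conf -> Idx -> (Conf -> R) -> Prop.
Variable ready : Conf -> Barb -> bool.

Definition is_dist (D : Conf -> R) : Prop :=
  (forall c, 0 <= D c) /\ finite_set (D @^-1` [set~ 0]) /\
  \sum_(c \in [set: Conf]) D c = 1.

Definition dirac (c : Conf) : Conf -> R := fun x => (x == c)%:R.

Definition ctx (O : Obs) (D : Conf -> R) : Conf -> R :=
  fun c' => \sum_(c \in [set c | plug O c = c']) D c.

Definition barb (D : Conf -> R) (b : Barb) : R :=
  \sum_(c \in [set c | ready c b]) D c.

Definition lstep (D : Conf -> R) (pi : Idx) (D' : Conf -> R) : Prop :=
  exists n (p : 'I_n -> R) (c : 'I_n -> Conf) (E : 'I_n -> Conf -> R),
    (forall i, 0 < p i) /\ (forall i, step (c i) pi (E i)) /\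
    D = (fun x => \sum_(i < n) p i * dirac (c i) x) /\
    D' = (fun x => \sum_(i < n) p i * E i x).

Definition rel := (Conf -> R) -> (Conf -> R) -> Prop.

Definition Cv (Rl : rel) : rel := fun D T =>
  exists n (p : 'I_n -> R) (Ds Ts : 'I_n -> Conf -> R),
    (forall i, 0 <= p i) /\ \sum_(i < n) p i = 1 /\
    (forall i, Rl (Ds i) (Ts i)) /\
    D = (fun x => \sum_(i < n) p i * Ds i x) /\
    T = (fun x => \sum_(i < n) p i * Ts i x).

Definition cs_progress (Rl Rl' : rel) : Prop :=
  forall D T, Rl D T ->
    is_dist D /\ is_dist T /\
    forall O : Obs,
      (forall b, barb (ctx O D) b = barb (ctx O T) b) /\
      (forall pi D', lstep (ctx O D) pi D' ->
         exists T', lstep (ctx O T) pi T' /\ Rl' D' T') /\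
      (forall pi T', lstep (ctx O T) pi T' ->
         exists D', lstep (ctx O D) pi D' /\ Rl' D' T').

Definition cs_bisim (Rl : rel) := cs_progress Rl Rl.
Definition cs_bisim_upto_cv (Rl : rel) := cs_progress Rl (Cv Rl).

Definition cs_bisimilar : rel := fun D T => exists Rl, cs_bisim Rl /\ Rl D T.

End LQCCS.

(* Main.v *)
Require Import Defs.
From HB Require Import structures.
From mathcomp Require Import all_boot all_order all_algebra.
From mathcomp Require Import boolp classical_sets functions cardinality fsbigop reals.
From mathcomp Require Import finmap.
From mathcomp Require Import ring lra.
Set Implicit Arguments. Unset Strict Implicit. Unset Printing Implicit Defensive.
Import Order.TTheory GRing.Theory Num.Theory.
Local Open Scope classical_set_scope.
Local Open Scope ring_scope.

Section Aux.
Variables (R : realType) (Conf : choiceType).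

Definition supp (F : Conf -> R) := F @^-1` [set~ 0].

Lemma fsum_supp (A S : set Conf) (G : Conf -> R) : finite_set S ->
  supp G `<=` S ->
  \sum_(c \in A) G c = \sum_(c <- fset_set (A `&` S)) G c.
Proof.
move=> fS sGS; rewrite -(fsbig_widen (A `&` S) A G) //; last first.
  move=> c [Ac] /not_andP [//|nS] /=; apply: contrapT => Gc; exact: nS (sGS c Gc).
rewrite fsbig_finite //; exact: finite_setIr.
Qed.

Lemma fsum_lin (I : finType) (A : set Conf) (p : I -> R) (F : I -> Conf -> R) :
  (forall i, finite_set (supp (F i))) ->
  \sum_(c \in A) (\sum_i p i * F i c) = \sum_i p i * \sum_(c \in A) F i c.
Proof.
move=> fF; set S := \bigcup_(i in [set: I]) supp (F i).
have fS : finite_set S by apply: bigcup_finite => //; exact: finite_finset.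
have sub i : supp (F i) `<=` S by move=> c Fc; exists i.
rewrite (fsum_supp _ fS); last first.
  move=> c Hc; apply: contrapT => nS; apply: Hc; apply: big1 => i _.
  suff -> : F i c = 0 by rewrite mulr0.
  by apply: contrapT => Fc; apply: nS; exists i.
rewrite exchange_big /=; apply: eq_bigr => i _.
by rewrite (fsum_supp A fS (sub i)) mulr_sumr.
Qed.


Lemma sum_enum (I : finType) (F : I -> R) :
  \sum_i F i = \sum_(k < #|I|) F (enum_val k).
Proof. by rewrite -big_enum_val. Qed.

Lemma mul_cond (a X Y : R) : 0 <= a -> (0 < a -> X = Y) -> a * X = a * Y.
Proof.
rewrite le_eqVlt => /orP [/eqP <-|ap H]; first by rewrite !mul0r.
by rewrite H.
Qed.

Lemma sum_pos (I : finType) (p : I -> R) (F : I -> R) : (forall i, 0 <= p i) ->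
  \sum_i p i * F i =
  \sum_(j : {x in [pred i | 0 < p i]}) p (val j) * F (val j).
Proof.
move=> p0.
rewrite -(big_sub [pred i | 0 < p i] (fun i => p i * F i)).
rewrite [LHS](bigID [pred i | 0 < p i]) /= [X in _ + X]big1 ?addr0 // => i.
have := p0 i; rewrite le_eqVlt => /orP [/eqP <-|->] //; by rewrite mul0r.
Qed.

End Aux.

Section Main.
Variables (R : realType) (Conf : choiceType) (Obs Barb : Type).
Variable plug : Obs -> Conf -> Conf.
Variable step : Conf -> Idx -> (Conf -> R) -> Prop.
Variable ready : Conf -> Barb -> bool.

Local Notation lstep := (@lstep R Conf step).
Local Notation Cv := (@Cv R Conf).
Local Notation dirac := (@dirac R Conf).
Local Notation rel := (@Defs.rel R Conf).

Definition CvG (Rl : rel) (D T : Conf -> R) :=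
  exists (I : finType) (p : I -> R) (Ds Ts : I -> Conf -> R),
    (forall i, 0 <= p i) /\ \sum_i p i = 1 /\
    (forall i, Rl (Ds i) (Ts i)) /\
    D = (fun x => \sum_i p i * Ds i x) /\
    T = (fun x => \sum_i p i * Ts i x).

Lemma Cv_G Rl D T : Cv Rl D T -> CvG Rl D T.
Proof.
move=> [n [p [Ds [Ts H]]]]; by exists 'I_n, p, Ds, Ts.
Qed.

Lemma G_Cv Rl D T : CvG Rl D T -> Cv Rl D T.
Proof.
move=> [I [p [Ds [Ts [p0 [p1 [HR [-> ->]]]]]]]].
exists #|I|, (fun k => p (enum_val k)), (fun k => Ds (enum_val k)),
  (fun k => Ts (enum_val k)).
split => //; split; first by rewrite -p1 sum_enum.
split => //; split; apply: funext => x; by rewrite sum_enum.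
Qed.

Definition lstepG (D : Conf -> R) (pi : Idx) (D' : Conf -> R) : Prop :=
  exists (I : finType) (p : I -> R) (c : I -> Conf) (E : I -> Conf -> R),
    (forall i, 0 <= p i) /\ (forall i, 0 < p i -> step (c i) pi (E i)) /\
    D = (fun x => \sum_i p i * dirac (c i) x) /\
    D' = (fun x => \sum_i p i * E i x).

Lemma G_lstep D pi D' : lstepG D pi D' -> lstep D pi D'.
Proof.
move=> [I [p [c [E [p0 [st [-> ->]]]]]]].
pose J : finType := {x in [pred i | 0 < p i]}.
exists #|J|, (fun k => p (val (enum_val k))), (fun k => c (val (enum_val k))),
  (fun k => E (val (enum_val k))).
split; first by move=> k; exact: (valP (enum_val k)).
split; first by move=> k; apply: st; exact: (valP (enum_val k)).
split; apply: funext => x; rewrite sum_pos //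
  (sum_enum (fun j : J => p (val j) * _)) //.
Qed.


Lemma pos_of_mul (a b : R) : 0 <= a -> 0 < a * b -> 0 < a.
Proof.
rewrite le_eqVlt => /orP [/eqP <-|//]; by rewrite mul0r ltxx.
Qed.

Definition W := {n : nat & (('I_n -> R) * ('I_n -> Conf) * ('I_n -> Conf -> R))%type}.
Lemma ord0_false (k : 'I_0) : False. Proof. by case: k. Qed.
Definition W0 : W := existT _ 0%N ((fun _ => 0), (fun k : 'I_0 => False_rect _ (ord0_false k)), (fun _ _ => 0)).

Lemma lstep_comb (I : finType) (p : I -> R) (A B : I -> Conf -> R) pi :
  (forall i, 0 <= p i) -> (forall i, 0 < p i -> lstep (A i) pi (B i)) ->
  lstepG (fun x => \sum_i p i * A i x) pi (fun x => \sum_i p i * B i x).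
Proof.
move=> p0 H.
have : forall i, exists w : W,
  0 < p i -> (forall k, 0 < (projT2 w).1.1 k) /\
    (forall k, step ((projT2 w).1.2 k) pi ((projT2 w).2 k)) /\
   A i = (fun x => \sum_k (projT2 w).1.1 k * dirac ((projT2 w).1.2 k) x) /\
   B i = (fun x => \sum_k (projT2 w).1.1 k * (projT2 w).2 k x).
  move=> i; case: (boolP (0 < p i)) => [/H [n [q [c [E HH]]]] | np].
  - by exists (existT _ n (q, c, E)).
  - by exists W0 => pp; exfalso; move/negP: np; apply.
move/choice => [f Hf].
exists {i : I & 'I_(projT1 (f i))},
  (fun s => p (tag s) * (projT2 (f (tag s))).1.1 (tagged s)),
  (fun s => (projT2 (f (tag s))).1.2 (tagged s)),
  (fun s => (projT2 (f (tag s))).2 (tagged s)).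
split.
  move=> [i k] /=; have := p0 i; rewrite le_eqVlt => /orP [/eqP <-|pp].
    by rewrite mul0r.
  by have [q0 _] := Hf i pp; rewrite mulr_ge0 // ltW.
split.
  move=> [i k] /= /(pos_of_mul (p0 i)) pp; by have [_ [st _]] := Hf i pp.
split; apply: funext => x.
- rewrite -(sig_big_dep (fun i => true) (fun i (k : 'I_(projT1 (f i))) => true)
    (fun i (k : 'I_(projT1 (f i))) => p i * (projT2 (f i)).1.1 k * dirac ((projT2 (f i)).1.2 k) x)) /=.
  apply: eq_bigr => i _; rewrite (mul_cond (p0 i) (X := A i x)
    (Y := \sum_k (projT2 (f i)).1.1 k * dirac ((projT2 (f i)).1.2 k) x)).
    by rewrite mulr_sumr; apply: eq_bigr => k _; rewrite mulrA.
  by move=> pp; have [_ [_ [-> _]]] := Hf i pp.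
- rewrite -(sig_big_dep (fun i => true) (fun i (k : 'I_(projT1 (f i))) => true)
    (fun i (k : 'I_(projT1 (f i))) => p i * (projT2 (f i)).1.1 k * (projT2 (f i)).2 k x)) /=.
  apply: eq_bigr => i _; rewrite (mul_cond (p0 i) (X := B i x)
    (Y := \sum_k (projT2 (f i)).1.1 k * (projT2 (f i)).2 k x)).
    by rewrite mulr_sumr; apply: eq_bigr => k _; rewrite mulrA.
  by move=> pp; have [_ [_ [_ ->]]] := Hf i pp.
Qed.


Definition V := {n : nat & (('I_n -> R) * ('I_n -> Conf -> R) * ('I_n -> Conf -> R))%type}.
Definition V0 : V := existT _ 0%N ((fun _ => 0), (fun _ _ => 0), (fun _ _ => 0)).

Lemma Cv_flat Rl (I : finType) (p : I -> R) (A B : I -> Conf -> R) :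
  (forall i, 0 <= p i) -> \sum_i p i = 1 ->
  (forall i, 0 < p i -> Cv Rl (A i) (B i)) ->
  CvG Rl (fun x => \sum_i p i * A i x) (fun x => \sum_i p i * B i x).
Proof.
move=> p0 p1 H.
have : forall i, exists w : V,
  (forall k, Rl ((projT2 w).1.2 k) ((projT2 w).2 k)) /\
  (0 < p i -> (forall k, 0 <= (projT2 w).1.1 k) /\ \sum_k (projT2 w).1.1 k = 1 /\
   A i = (fun x => \sum_k (projT2 w).1.1 k * (projT2 w).1.2 k x) /\
   B i = (fun x => \sum_k (projT2 w).1.1 k * (projT2 w).2 k x)).
  move=> i; case: (boolP (0 < p i)) => [/H [n [q [Ds [Ts [q0 [q1 [HR HH]]]]]]] | np].
  - by exists (existT _ n (q, Ds, Ts)).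
  - exists V0; split; first by case.
    by move=> pp; exfalso; move/negP: np; apply.
move/choice => [f Hf].
exists {i : I & 'I_(projT1 (f i))},
  (fun s => p (tag s) * (projT2 (f (tag s))).1.1 (tagged s)),
  (fun s => (projT2 (f (tag s))).1.2 (tagged s)),
  (fun s => (projT2 (f (tag s))).2 (tagged s)).
split.
  move=> [i k] /=; have := p0 i; rewrite le_eqVlt => /orP [/eqP <-|pp].
    by rewrite mul0r.
  by have [q0 _] := (Hf i).2 pp; rewrite mulr_ge0 // ltW.
split.
  rewrite -(sig_big_dep (fun i => true) (fun i (k : 'I_(projT1 (f i))) => true)
    (fun i (k : 'I_(projT1 (f i))) => p i * (projT2 (f i)).1.1 k)) /= -p1.
  apply: eq_bigr => i _; rewrite -mulr_sumr.
  rewrite -[RHS]mulr1.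
  by apply: mul_cond => // pp; have [_ [-> _]] := (Hf i).2 pp.
split; first by move=> [i k] /=; have [HR _] := Hf i.
split; apply: funext => x.
- rewrite -(sig_big_dep (fun i => true) (fun i (k : 'I_(projT1 (f i))) => true)
    (fun i (k : 'I_(projT1 (f i))) => p i * (projT2 (f i)).1.1 k * (projT2 (f i)).1.2 k x)) /=.
  apply: eq_bigr => i _; rewrite (mul_cond (p0 i) (X := A i x)
    (Y := \sum_k (projT2 (f i)).1.1 k * (projT2 (f i)).1.2 k x)).
    by rewrite mulr_sumr; apply: eq_bigr => k _; rewrite mulrA.
  by move=> pp; have [_ [_ [-> _]]] := (Hf i).2 pp.
- rewrite -(sig_big_dep (fun i => true) (fun i (k : 'I_(projT1 (f i))) => true)
    (fun i (k : 'I_(projT1 (f i))) => p i * (projT2 (f i)).1.1 k * (projT2 (f i)).2 k x)) /=.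
  apply: eq_bigr => i _; rewrite (mul_cond (p0 i) (X := B i x)
    (Y := \sum_k (projT2 (f i)).1.1 k * (projT2 (f i)).2 k x)).
    by rewrite mulr_sumr; apply: eq_bigr => k _; rewrite mulrA.
  by move=> pp; have [_ [_ [_ ->]]] := (Hf i).2 pp.
Qed.


Lemma decomp (I : finType) (p : I -> R) (a : I -> Conf -> R) pi D' :
  (forall i, 0 <= p i) -> (forall i x, 0 <= a i x) ->
  lstep (fun x => \sum_i p i * a i x) pi D' ->
  exists D'' : I -> Conf -> R, (forall i, 0 < p i -> lstepG (a i) pi (D'' i)) /\
    D' = (fun y => \sum_i p i * D'' i y).
Proof.
move=> p0 a0 [m [q [c [E [q0 [st [Hw ->]]]]]]].
have wq x : \sum_i p i * a i x = \sum_j q j * dirac (c j) x := congr1 (fun f => f x) Hw.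
have wpos j : 0 < \sum_i p i * a i (c j).
  rewrite wq (bigD1 j) //= /dirac eqxx mulr1.
  have : 0 <= \sum_(k < m | k != j) q k * (c j == c k)%:R.
    by apply: sumr_ge0 => k _; rewrite mulr_ge0 // ?ltW // ler0n.
  by move: (q0 j); lra.
pose r i j := q j * (p i * a i (c j)) / \sum_i p i * a i (c j).
have r0 i j : 0 <= r i j by rewrite /r divr_ge0 ?mulr_ge0 // ?ltW.
exists (fun i y => \sum_j (r i j / p i) * E j y).
split.
- move=> i pp; exists 'I_m, (fun j => r i j / p i), c, E.
  split; first by move=> j; rewrite divr_ge0 // ltW.
  split; first by move=> j _; exact: st j.
  split => //; apply: funext => x.
  transitivity (a i x / (\sum_i p i * a i x) * (\sum_i p i * a i x)).
    case: (\sum_i p i * a i x =P 0) => [w0|/eqP wn]; last by rewrite divfK.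
    rewrite w0 mulr0.
    have H0 : forall k, p k * a k x = 0.
      move=> k; apply: (psumr_eq0P (P := xpredT) (F := fun k => p k * a k x)) => //.
      by move=> k' _; rewrite mulr_ge0.
    have := H0 i.
    by move/eqP; rewrite mulf_eq0 (negbTE (lt0r_neq0 pp)) /= => /eqP.
  rewrite {2}wq mulr_sumr; apply: eq_bigr => j _.
  rewrite /dirac; case: eqP => [->|_]; last by rewrite !mulr0.
  rewrite /r /=; field.
  by rewrite !lt0r_neq0 ?wpos.
- apply: funext => y.
  transitivity (\sum_i \sum_j r i j * E j y).
    rewrite exchange_big; apply: eq_bigr => j _; rewrite -mulr_suml.
    congr (_ * _); rewrite /r -mulr_suml -mulr_sumr mulfK //.
    exact: lt0r_neq0.
  apply: eq_bigr => i _; rewrite mulr_sumr; apply: eq_bigr => j _.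
  have := p0 i; rewrite le_eqVlt => /orP [/eqP pz|pp].
    by rewrite /r -pz !mul0r mulr0 !mul0r.
  by rewrite mulrA [p i * _]mulrC divfK // lt0r_neq0.
Qed.


Local Notation ctx := (@ctx R Conf Obs plug).
Local Notation barb := (@barb R Conf Barb ready).
Local Notation progress := (@cs_progress R Conf Obs Barb plug step ready).

Lemma ctx_lin O (I : finType) (p : I -> R) (Ds : I -> Conf -> R) :
  (forall i, finite_set (supp (Ds i))) ->
  ctx O (fun x => \sum_i p i * Ds i x) = fun x => \sum_i p i * ctx O (Ds i) x.
Proof. by move=> fD; apply: funext => x; rewrite /Defs.ctx fsum_lin. Qed.

Lemma ctx_supp O D : finite_set (supp D) -> finite_set (supp (ctx O D)).
Proof.
move=> fD; apply: (sub_finite_set _ (finite_image (plug O) fD)).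
move=> c' Hc; apply: contrapT => nim; apply: Hc; apply: fsbig1 => c /= pc.
by apply: contrapT => Dc; apply: nim; exists c.
Qed.

Lemma ctx_ge0 O D : (forall c, 0 <= D c) -> forall x, 0 <= ctx O D x.
Proof. by move=> D0 x; apply: fsumr_ge0. Qed.

Lemma barb_lin (I : finType) (p : I -> R) (X : I -> Conf -> R) b :
  (forall i, finite_set (supp (X i))) ->
  barb (fun x => \sum_i p i * X i x) b = \sum_i p i * barb (X i) b.
Proof. by move=> fX; rewrite /Defs.barb fsum_lin. Qed.

Lemma dist_comb (I : finType) (p : I -> R) (Ds : I -> Conf -> R) :
  (forall i, 0 <= p i) -> \sum_i p i = 1 -> (forall i, is_dist (Ds i)) ->
  is_dist (fun x => \sum_i p i * Ds i x).
Proof.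
move=> p0 p1 dD; split.
  by move=> c; apply: sumr_ge0 => i _; rewrite mulr_ge0 //; case: (dD i).
split.
  apply: (sub_finite_set (B := \bigcup_(i in [set: I]) supp (Ds i))).
    move=> c Hc; apply: contrapT => nS; apply: Hc; apply: big1 => i _.
    suff -> : Ds i c = 0 by rewrite mulr0.
    by apply: contrapT => Fc; apply: nS; exists i.
  apply: bigcup_finite; first exact: finite_finset.
  by move=> i _; case: (dD i) => _ [].
rewrite fsum_lin; last by move=> i; case: (dD i) => _ [].
rewrite -p1; apply: eq_bigr => i _; by case: (dD i) => _ [_ ->]; rewrite mulr1.
Qed.

Lemma fwd Rl : progress Rl (Cv Rl) -> forall D T, Cv Rl D T ->
  forall O pi D', lstep (ctx O D) pi D' ->
  exists T', lstep (ctx O T) pi T' /\ Cv Rl D' T'.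
Proof.
move=> HR D T /Cv_G [I [p [Ds [Ts [p0 [p1 [HRl [-> ->]]]]]]]] O pi D' Hs.
have dD i : is_dist (Ds i) := (HR _ _ (HRl i)).1.
have dT i : is_dist (Ts i) := (HR _ _ (HRl i)).2.1.
rewrite ctx_lin in Hs; last by move=> i; case: (dD i) => _ [].
have [D'' [HD ->]] := decomp p0 (fun i => ctx_ge0 O (dD i).1) Hs.
have : forall i, exists T'', 0 < p i ->
    lstep (ctx O (Ts i)) pi T'' /\ Cv Rl (D'' i) T''.
  move=> i; case: (boolP (0 < p i)) => pp.
  - have [_ [_ H]] := HR _ _ (HRl i); have [_ [H1 _]] := H O.
    have [T'' HT] := H1 _ _ (G_lstep (HD i pp)); by exists T''.
  - by exists (fun _ => 0) => pp'; exfalso; move/negP: pp; apply.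
move/choice => [T'' HT].
exists (fun y => \sum_i p i * T'' i y); split.
- rewrite ctx_lin; last by move=> i; case: (dT i) => _ [].
  by apply: G_lstep; apply: lstep_comb => // i pp; exact: (HT i pp).1.
- by apply: G_Cv; apply: Cv_flat => // i pp; exact: (HT i pp).2.
Qed.

Lemma barb_eq Rl : progress Rl (Cv Rl) -> forall D T, Cv Rl D T ->
  forall O b, barb (ctx O D) b = barb (ctx O T) b.
Proof.
move=> HR D T /Cv_G [I [p [Ds [Ts [p0 [p1 [HRl [-> ->]]]]]]]] O b.
have dD i : is_dist (Ds i) := (HR _ _ (HRl i)).1.
have dT i : is_dist (Ts i) := (HR _ _ (HRl i)).2.1.
rewrite ctx_lin; last by move=> i; case: (dD i) => _ [].
rewrite [in RHS]ctx_lin; last by move=> i; case: (dT i) => _ [].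
have fD i : finite_set (supp (ctx O (Ds i))).
  by apply: ctx_supp; case: (dD i) => _ [].
have fT i : finite_set (supp (ctx O (Ts i))).
  by apply: ctx_supp; case: (dT i) => _ [].
rewrite !barb_lin //; apply: eq_bigr => i _; congr (_ * _).
by have [_ [_ H]] := HR _ _ (HRl i); have [-> _] := H O.
Qed.

Definition flip (Rl : rel) : rel := fun a b => Rl b a.

Lemma Cv_flip Rl X Y : Cv Rl X Y -> Cv (flip Rl) Y X.
Proof.
move=> [n [p [Ds [Ts [p0 [p1 [HR [-> ->]]]]]]]].
by exists n, p, Ts, Ds.
Qed.

Lemma prog_flip Rl : progress Rl (Cv Rl) -> progress (flip Rl) (Cv (flip Rl)).
Proof.
move=> H D T HDT; have [dT [dD HO]] := H _ _ HDT; split => //; split => // O.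
have [hb [hf hb']] := HO O; split; first by move=> b; rewrite hb.
split.
- move=> pi D' st; have [T' [st' c]] := hb' _ _ st; exists T'; split => //.
  exact: Cv_flip.
- move=> pi T' st; have [D' [st' c]] := hf _ _ st; exists D'; split => //.
  exact: Cv_flip.
Qed.

Lemma Cv_bisim Rl : progress Rl (Cv Rl) -> progress (Cv Rl) (Cv Rl).
Proof.
move=> H D T HC; split.
  have [I [p [Ds [Ts [p0 [p1 [HRl [-> _]]]]]]]] := Cv_G HC.
  by apply: dist_comb => // i; exact: (H _ _ (HRl i)).1.
split.
  have [I [p [Ds [Ts [p0 [p1 [HRl [_ ->]]]]]]]] := Cv_G HC.
  by apply: dist_comb => // i; exact: (H _ _ (HRl i)).2.1.
move=> O; split; first exact: barb_eq H D T HC O.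
split; first exact: fwd H D T HC O.
move=> pi T' st.
have [D' [st' c]] := fwd (prog_flip H) (Cv_flip HC) st.
by exists D'; split => //; exact: (Cv_flip c).
Qed.

Lemma Cv_incl (Rl : rel) D T : Rl D T -> Cv Rl D T.
Proof.
move=> H; exists 1%N, (fun _ => 1), (fun _ => D), (fun _ => T).
split => //; split; first by rewrite big_ord1.
split => //; split; apply: funext => x; by rewrite big_ord1 mul1r.
Qed.

End Main.

Theorem proposition4p19 (R : realType) (Conf : choiceType) (Obs Barb : Type)
  (plug : Obs -> Conf -> Conf) (step : Conf -> Idx -> (Conf -> R) -> Prop)
  (ready : Conf -> Barb -> bool)
  (Rl : (Conf -> R) -> (Conf -> R) -> Prop) (D T : Conf -> R) :
  cs_bisim_upto_cv plug step ready Rl -> Rl D T ->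
  cs_bisimilar plug step ready D T.
Proof.
move=> H HDT; exists (Cv Rl); split; first exact: Cv_bisim.
exact: Cv_incl.
Qed.
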